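(* Let $Y$ be an indeterminate adjunction space with core space $X$, attachment spaces $\{A_j\}_{j\in\mathbb{N}}$ and attachment points $\{x_j\}_{j\in\mathbb{N}}$. If $Z\subseteq Y$ is a subspace that is a Peano continuum and meets $X$ and each set $A_j\setminus\{x_j\}$, then $Z$ is homeomorphic to the shrinking adjunction space $\operatorname{\bf Adj}(Z\cap X,x_j,Z\cap A_j,x_j)$ obtained by attaching the spaces $\{Z\cap A_j\}_{j\in\mathbb{N}}$ to $Z\cap X$ along the points $\{x_j\}_{j\in\mathbb{N}}$.
   Context: All spaces Hausdorff; Peano continuum = connected, locally path-connected compact metric space. $Y$ is an indeterminate adjunction space with core $X$, attachment spaces $\{A_j\}_{j\in J}$ and attachment points $\{x_j\}_{j\in J}$ if $X$ is a closed subspace of $Y$ and $Y\setminus X$ is the disjoint union of open sets $N_j$ ($j\in J$) with $A_j=\overline{N_j}$ and $A_j\cap X=\{x_j\}$ for all $j$. The shrinking adjunction space $\operatorname{\bf Adj}(X',x_j,A'_j,x_j)$ is $\varprojlim_k Y_k\subseteq\prod_k Y_k$ where $Y_k$ is the adjunction space from $X'\sqcup A'_1\sqcup\dots\sqcup A'_k$ identifying the basepoint $x_j\in A'_j$ with $x_j\in X'$, and $Y_{k+1}\to Y_k$ collapses $A'_{k+1}$ to $x_{k+1}$. *)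

(* Defs.v *)
From HB Require Import structures.
From mathcomp Require Import all_boot all_order all_algebra generic_quotient.
From mathcomp Require Import all_classical all_reals all_analysis.

Set Implicit Arguments.
Unset Strict Implicit.
Unset Printing Implicit Defensive.

Import Order.TTheory GRing.Theory Num.Theory.
Local Open Scope classical_set_scope.
Local Open Scope ring_scope.
Local Open Scope quotient_scope.

Definition indeterminate_adjunction (Y : topologicalType) (X : set Y)
    (A : nat -> set Y) (x : nat -> Y) : Prop :=
  closed X /\
  exists N : nat -> set Y,
    [/\ (forall j, open (N j)),
        (forall i j, i <> j -> N i `&` N j = set0),
        ~` X = \bigcup_j N j,
        (forall j, A j = closure (N j)) &
        (forall j, A j `&` X = [set x j])].

Definition path_connected_set (R : realType) (T : topologicalType) (V : set T)
  : Prop :=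
  forall a b, V a -> V b ->
    exists g : R -> T, [/\ {within `[0, 1], continuous g},
      g 0 = a, g 1 = b & g @` `[0, 1] `<=` V].

Definition locally_path_connected (R : realType) (T : topologicalType) : Prop :=
  forall (p : T) (U : set T), nbhs p U ->
    exists V : set T, [/\ nbhs p V, V `<=` U & path_connected_set R V].

Definition metrizable (R : realType) (T : topologicalType) : Prop :=
  exists d : T -> T -> R,
    [/\ (forall p q, 0 <= d p q),
        (forall p q, d p q = 0 <-> p = q),
        (forall p q, d p q = d q p),
        (forall p q r, d p r <= d p q + d q r) &
        (forall (p : T) (U : set T),
           nbhs p U <-> exists2 e : R, 0 < e & [set q | d p q < e] `<=` U)].

Definition peano_continuum (R : realType) (T : topologicalType) : Prop :=
  [/\ compact [set: T], connected [set: T], locally_path_connected R T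
      & metrizable R T].

Definition homeomorphic (S T : topologicalType) : Prop :=
  exists (f : S -> T) (g : T -> S),
    [/\ continuous f, continuous g, cancel f g & cancel g f].

(* Shrinking adjunction space Adj(X', x_j, A'_j, a_j):                      *)
(* Y_k = (X' + A'_0 + ... + A'_(k-1)) / (a_j ~ x_j), and the inverse limit *)
(* of the maps Y_(k+1) -> Y_k collapsing A'_k to x_k, as a subspace of the *)
(* product  prod_k Y_k.                                                     *)
Section ShrinkingAdjunction.
Context (X' : topologicalType) (A : nat -> topologicalType)
        (x : nat -> X') (a : forall j, A j).

Definition adj_piece (k : nat) (o : option 'I_k) : topologicalType :=
  if o is Some j then A (nat_of_ord j) else X'.

Definition adj_sum (k : nat) := {o : option 'I_k & adj_piece o}.

Definition adj_glue (k : nat) (s : adj_sum k) : X' + {j : nat & A j} :=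
  let: existT o y := s in
  (match o return adj_piece o -> X' + {j : nat & A j} with
   | None => fun y => inl y
   | Some j => fun y => if `[< y = a j >] then inl (x j)
                        else inr (existT _ (nat_of_ord j) y)
   end) y.

Definition adj_rel (k : nat) : rel (adj_sum k) :=
  fun s t => `[< adj_glue s = adj_glue t >].

Lemma adj_rel_refl k : reflexive (@adj_rel k).
Proof. by move=> s; apply/asboolP. Qed.

Lemma adj_rel_sym k : symmetric (@adj_rel k).
Proof.
by move=> s t; apply/idP/idP => /asboolP e; apply/asboolP.
Qed.

Lemma adj_rel_trans k : transitive (@adj_rel k).
Proof.
by move=> s t u /asboolP e1 /asboolP e2; apply/asboolP; rewrite e1.
Qed.

Definition adj_equiv k := EquivRel (@adj_rel k) (@adj_rel_refl k)
  (@adj_rel_sym k) (@adj_rel_trans k).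

Section Stage.
Variable k : nat.
Definition adj_stage := {eq_quot adj_equiv k}.
HB.instance Definition _ := Topological.copy adj_stage
  (quotient_topology adj_stage).
HB.instance Definition _ := Quotient.on adj_stage.
End Stage.

(* Y_(k+1) -> Y_k : collapse A'_k to x_k, identity elsewhere *)
Definition adj_bond_sum (k : nat) (s : adj_sum k.+1) : adj_stage k :=
  let: existT o y := s in
  (match o return adj_piece o -> adj_stage k with
   | None => fun y => \pi_(adj_stage k) (existT (@adj_piece k) None y)
   | Some j => fun y =>
       (match (nat_of_ord j < k)%N as b
              return ((nat_of_ord j < k)%N = b) -> adj_stage k with
        | true => fun h =>
            \pi_(adj_stage k) (existT (@adj_piece k) (Some (Ordinal h)) y)
        | false => fun _ =>
            \pi_(adj_stage k) (existT (@adj_piece k) None (x k))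
        end) erefl
   end) y.

Definition adj_bond (k : nat) (y : adj_stage k.+1) : adj_stage k :=
  adj_bond_sum (repr y).

Definition adj_limit_set : set (prod_topology (fun k => adj_stage k)) :=
  [set y | forall k : nat, @adj_bond k (y k.+1) = y k].

Definition shrinking_adjunction : Type := set_type adj_limit_set.
HB.instance Definition _ := Topological.on shrinking_adjunction.

End ShrinkingAdjunction.

(* Main.v *)
Require Import Defs.
From HB Require Import structures.
From mathcomp Require Import all_boot all_order all_algebra generic_quotient.
From mathcomp Require Import all_classical all_reals all_analysis.
From mathcomp Require Import unstable.

Set Implicit Arguments.
Unset Strict Implicit.
Unset Printing Implicit Defensive.
Import Order.TTheory GRing.Theory Num.Theory.
Local Open Scope classical_set_scope.
Local Open Scope ring_scope.
Local Open Scope quotient_scope.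

Lemma inj_hausdorff (S T : topologicalType) (f : S -> T) :
  continuous f -> injective f -> hausdorff_space T -> hausdorff_space S.
Proof.
move=> cf injf; rewrite !open_hausdorff => hT p q pq.
have fpq : f p != f q by apply: contra pq => /eqP /injf ->.
have [[P Q] /= [Pp Qq] [oP oQ /eqP PQ]] := hT _ _ fpq.
exists (f @^-1` P, f @^-1` Q); first by split; rewrite inE /=; apply/set_mem.
split; [exact: open_comp|exact: open_comp|].
by apply/eqP; rewrite -preimage_setI PQ preimage_set0.
Qed.

Lemma set_type_compact (Y : topologicalType) (B : set Y) :
  compact B -> compact [set: set_type B].
Proof.
move=> cB F PF _.
have : (set_val @ F) B.
  rewrite /= (_ : _ @^-1` _ = setT); first exact: filterT.
  by apply/seteqP; split=> // s _; apply/set_mem/(valP s).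
move=> /(cB _ (fmap_proper_filter _ PF)) [y [By cly]].
exists (exist _ y (mem_set By)); split => //.
move=> P Q FP nQ.
move: nQ; rewrite nbhsE => -[W [oW Wy] WQ].
case: oW => V oV VW.
have FP' : F (set_val @^-1` (set_val @` P)).
  by apply: (filterS _ FP) => s Ps; exists s.
have := cly (set_val @` P) V FP'; case.
  apply: open_nbhs_nbhs; split => //.
  by move: Wy; rewrite -VW.
move=> _ [[s Ps <-] Vs]; exists s; split => //; apply: WQ; rewrite -VW //.
Qed.

Lemma prod_continuous (S : topologicalType) (I : Type) (K : I -> topologicalType)
  (g : S -> prod_topology K) :
  (forall i, continuous (fun s => g s i)) -> continuous g.
Proof.
move=> cg s; apply/cvg_sup => i U.
rewrite nbhsE => -[W [oW Wg] WU].
case: oW => V oV VW.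
apply: (filterS WU); rewrite -VW.
apply: (cg i s); apply: open_nbhs_nbhs; split => //.
by move: Wg; rewrite -VW.
Qed.

Section Main.
Variables (R : realType) (Y : topologicalType) (X : set Y)
  (A : nat -> set Y) (x : nat -> Y) (Z : set Y) (N : nat -> set Y).
Hypothesis hY : hausdorff_space Y.
Hypothesis cX : closed X.
Hypothesis oN : forall j, open (N j).
Hypothesis dN : forall i j, i <> j -> N i `&` N j = set0.
Hypothesis cXN : ~` X = \bigcup_j N j.
Hypothesis AN : forall j, A j = closure (N j).
Hypothesis AX : forall j, A j `&` X = [set x j].
Hypothesis pZ : peano_continuum R (set_type Z).
Hypothesis ZX : Z `&` X !=set0.
Hypothesis ZA : forall j, Z `&` (A j `\ x j) !=set0.

Lemma NX j y : N j y -> ~ X y.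
Proof.
move=> Ny Xy; have : (~` X) y by rewrite cXN; exists j.
by [].
Qed.

Lemma notX_N y : ~ X y -> exists j, N j y.
Proof. by move=> nX; have : (~` X) y by []; rewrite cXN => -[j _ Nj]; exists j. Qed.

Lemma N_A j y : N j y -> A j y.
Proof. by rewrite AN => Ny; apply: subset_closure. Qed.

Lemma xX j : X (x j).
Proof. have : (A j `&` X) (x j) by rewrite AX. by case. Qed.

Lemma xA j : A j (x j).
Proof. have : (A j `&` X) (x j) by rewrite AX. by case. Qed.

Lemma NN i j y : N i y -> N j y -> i = j.
Proof.
move=> Ni Nj; apply: contrapT => ij.
by have : (N i `&` N j) y by []; rewrite dN.
Qed.

Lemma A_N j y : A j y -> N j y \/ y = x j.
Proof.
move=> Ay; have [Xy|nXy] := pselect (X y).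
  by right; have : (A j `&` X) y by []; rewrite AX.
left; have [i Ni] := notX_N nXy.
have [<-//|ij] := pselect (i = j).
move: Ay; rewrite AN => /(_ (N i)) [].
  by apply: open_nbhs_nbhs; split.
by move=> z [Njz Niz]; have := NN Niz Njz.
Qed.

Lemma A_Ni i j y : A i y -> N j y -> i = j.
Proof.
move=> /A_N [Ni Nj|-> Nj]; first exact: NN Ni Nj.
by have := NX Nj (xX i).
Qed.

Lemma closedA j : closed (A j).
Proof. by rewrite AN; exact: closed_closure. Qed.

Local Notation T := (set_type Z).

Lemma cval : continuous (set_val : T -> Y).
Proof. exact: initial_continuous. Qed.

Lemma T_conn_hit (S : set T) j : connected S ->
  (exists s, S s /\ N j (val s)) -> (exists s, S s /\ ~ N j (val s)) ->
  exists s, S s /\ val s = x j.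
Proof.
move=> cS [s [Ss Ns]] [t [St Nt]]; apply: contrapT => hx.
have : S `&` (set_val @^-1` N j) = S.
  apply: cS.
  - by exists s.
  - exists (set_val @^-1` N j) => //; apply: open_comp => // ? _; apply: cval.
  - exists (set_val @^-1` A j).
      by apply: closed_comp => //; [move=> ? _; apply: cval|exact: closedA].
    apply/seteqP; split => u [Su Hu]; split => //=; first exact: N_A.
    by case: (A_N Hu) => // Hx; exfalso; apply: hx; exists u.
move=> E; have : (S `&` (set_val @^-1` N j)) t by rewrite E.
by case.
Qed.


Lemma openNT j : open (set_val @^-1` N j : set T).
Proof. by exists (N j). Qed.

Lemma hZx j : Z (x j).
Proof.
case: pZ => _ cT _ _.
have [y [Zy [Ay yx]]] := ZA j.
have Ny : N j y by case: (A_N Ay).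
have [z [Zz Xz]] := ZX.
have [s [_ sx]] := @T_conn_hit setT j cT
  (ex_intro _ (exist _ y (mem_set Zy)) (conj I Ny))
  (ex_intro _ (exist _ z (mem_set Zz)) (conj I (fun Nz => NX Nz Xz))).
by rewrite -sx; apply/set_mem/(valP s).
Qed.

Definition xz j : T := exist _ (x j) (mem_set (hZx j)).

Definition jz (z : T) : nat := xget 0%N [set j | N j (val z)].

Definition cc k (z : T) : T :=
  if `[< N (jz z) (val z) >] && (k <= jz z)%N then xz (jz z) else z.

Lemma jzE z j : N j (val z) -> jz z = j.
Proof.
move=> Nj; have : N (jz z) (val z).
  by rewrite /jz; apply: (@xgetPex _ 0%N [set j | N j (val z)]); exists j.
by move=> Nj'; exact: NN Nj' Nj.
Qed.

Lemma ccN k z j : N j (val z) -> cc k z = if (k <= j)%N then xz j else z.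
Proof.
move=> Nj; rewrite /cc (jzE Nj).
by have -> : `[< N j (val z) >] = true by apply/asboolP.
Qed.

Lemma ccnN k z : (forall j, ~ N j (val z)) -> cc k z = z.
Proof.
move=> nN; rewrite /cc; case: asboolP => //= H.
by have := nN _ H.
Qed.

Lemma cc_continuous k : continuous (cc k).
Proof.
move=> z U /= nU.
have [[j Nj]|nN] := pselect (exists j, N j (val z)).
  have nNj : nbhs z (set_val @^-1` N j : set T).
    by apply: open_nbhs_nbhs; split => //; exact: openNT.
  move: nU; rewrite (ccN k Nj); case: ifP => kj nU.
    apply: filterS nNj => w Nw; rewrite /= (ccN k Nw) kj.
    exact: nbhs_singleton nU.
  apply: filterS (filterI nU nNj) => w [Uw Nw].
  by rewrite /= (ccN k Nw) kj.
have nN' : forall j, ~ N j (val z) by move=> j Nj; apply: nN; exists j.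
move: nU; rewrite (ccnN k nN') => nU.
case: pZ => _ _ lpc _.
have [V [nV VU pcV]] := lpc z U nU.
have Vz : V z := nbhs_singleton nV.
apply: filterS nV => w Vw /=.
have [[j Nj]|nNw] := pselect (exists j, N j (val w)); last first.
  by rewrite ccnN //; [exact: VU|move=> j Nj; apply: nNw; exists j].
rewrite (ccN k Nj); case: ifP => kj; last exact: VU.
have [g [cg g0 g1 gV]] := pcV w z Vw Vz.
have cS : connected (g @` `[0, 1]).
  by apply: connected_continuous_connected => //; exact: segment_connected.
have h0 : (0:R) \in `[0, 1]%R by rewrite in_itv /= lexx ler01.
have h1 : (1:R) \in `[0, 1]%R by rewrite in_itv /= lexx ler01.
have [s [[r r01 <-] sx]] := @T_conn_hit _ j cS
  (ex_intro _ w (conj (ex_intro2 _ _ 0 h0 g0) Nj))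
  (ex_intro _ z (conj (ex_intro2 _ _ 1 h1 g1) (nN' j))).
apply: VU; apply: gV; rewrite (_ : xz j = g r); first by exists r.
by apply: val_inj.
Qed.

Definition hX j : x j \in Z `&` X := mem_set (conj (hZx j) (xX j)).
Definition hA j : x j \in Z `&` A j := mem_set (conj (hZx j) (xA j)).
Local Notation X' := (set_type (Z `&` X)).
Local Notation AA := (fun j => set_type (Z `&` A j)).
Definition xs j : X' := exist _ (x j) (hX j).
Definition as_ j : AA j := exist _ (x j) (hA j).
Local Notation Yk k := (@adj_stage X' AA xs as_ k).

Definition incZ (B : set Y) (hB : B `<=` Z) (b : set_type B) : T :=
  exist _ (val b) (mem_set (hB _ (set_mem (valP b)))).

Lemma incZ_continuous (B : set Y) (hB : B `<=` Z) : continuous (incZ hB).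
Proof. apply: continuous_comp_initial; exact: initial_continuous. Qed.

Definition pm k (o : option 'I_k) : @adj_piece X' AA k o -> T :=
  match o with None => incZ (@subIsetl _ Z X)
  | Some j => incZ (@subIsetl _ Z (A j)) end.

Definition esum k : adj_sum X' AA k -> T := sigT_fun (@pm k).

Lemma esum_continuous k : continuous (@esum k).
Proof. by apply: sigT_continuous => -[j|]; exact: incZ_continuous. Qed.

Definition G (g : X' + {j : nat & AA j}) : T :=
  match g with inl p => incZ (@subIsetl _ Z X) p
  | inr (existT j y) => incZ (@subIsetl _ Z (A j)) y end.

Lemma esumG k (s : adj_sum X' AA k) : esum s = G (adj_glue xs as_ s).
Proof.
case: s => -[j|] y //=; rewrite /esum /sigT_fun /=.
by case: asboolP => [->|] //=; apply: val_inj.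
Qed.

Definition ee k (q : Yk k) : T := esum (repr q).

Lemma ee_pi k s : ee (\pi_(Yk k) s) = esum s.
Proof.
have : repr (\pi_(Yk k) s) = s %[mod (Yk k)] by rewrite reprK.
move=> /eqmodP /asboolP H.
by rewrite /ee !esumG H.
Qed.

Lemma ee_continuous k : continuous (@ee k).
Proof.
apply/continuousP => U oU.
rewrite /open /= /quotient_open.
have -> : \pi_(Yk k) @^-1` (ee (k:=k) @^-1` U) = @esum k @^-1` U.
  by apply/seteqP; split => s /=; rewrite ee_pi.
by apply: open_comp => // ? _; exact: esum_continuous.
Qed.

Definition gP (g : X' + {j : nat & AA j}) : Prop :=
  match g with inl _ => True | inr (existT j y) => val y <> x j end.

Lemma glueP k (s : adj_sum X' AA k) : gP (adj_glue xs as_ s).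
Proof.
case: s => -[j|] y //=; case: asboolP => //= yn yx.
by apply: yn; apply: val_inj.
Qed.

Lemma valG (g : X' + {j : nat & AA j}) :
  val (G g) = match g with inl p => val p | inr (existT j y) => val y end.
Proof. by case: g => [|[]]. Qed.

Lemma G_inj g g' : gP g -> gP g' -> G g = G g' -> g = g'.
Proof.
move=> Pg Pg' /(congr1 val); rewrite !valG.
have valX (p : X') : X (sval p) by have /set_mem [] := valP p.
have valN j (y : AA j) : sval y <> x j -> N j (sval y).
  move=> yx; have /set_mem [_ Ay] := valP y.
  by case: (A_N Ay).
case: g Pg => [p|[j y]] Pg; case: g' Pg' => [p'|[i y']] Pg' /= E.
- by congr inl; apply: val_inj.
- by exfalso; apply: (NX (valN _ _ Pg')); move: (valX p); rewrite E.
- by exfalso; apply: (NX (valN _ _ Pg)); move: (valX p'); rewrite -E.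
- have Ny' : N i (sval y) by rewrite E; exact: valN.
  have ji := NN (valN _ _ Pg) Ny'; subst i.
  by congr inr; congr existT; apply: val_inj.
Qed.

Lemma ee_inj k : injective (@ee k).
Proof.
move=> q q'; rewrite /ee => E.
rewrite -[q]reprK -[q']reprK; apply/eqmodP; apply/asboolP.
by apply: G_inj; [exact: glueP|exact: glueP|rewrite -!esumG].
Qed.


Lemma T_hausdorff : hausdorff_space T.
Proof. exact: (inj_hausdorff cval val_inj hY). Qed.

Lemma T_compact : compact [set: T].
Proof. by case: pZ. Qed.

Lemma Z_compact : compact Z.
Proof.
have -> : Z = set_val @` [set: T].
  apply/seteqP; split => [y Zy|_ [s _ <-]]; last exact/set_mem/(valP s).
  by exists (exist _ y (mem_set Zy)).
by apply: continuous_compact; [apply: continuous_subspaceT; exact: cval|exact: T_compact].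
Qed.

Lemma pi_cont k : continuous (\pi_(Yk k)).
Proof. by apply/continuousP => U oU; exact: oU. Qed.

Lemma Yk_compact k : compact [set: Yk k].
Proof.
have -> : [set: Yk k] = \pi_(Yk k) @` [set: adj_sum X' AA k].
  by apply/seteqP; split => // q _; exists (repr q) => //; rewrite reprK.
apply: continuous_compact; first by apply: continuous_subspaceT; exact: pi_cont.
apply: sigT_compact; first exact: finite_finset.
case=> [j|] /=; apply: set_type_compact; apply: compact_closedI; try exact: Z_compact.
  exact: closedA.
exact: cX.
Qed.

Lemma Yk_hausdorff k : hausdorff_space (Yk k).
Proof. exact: (inj_hausdorff (@ee_continuous k) (@ee_inj k) T_hausdorff). Qed.

Lemma ee_closed k (C : set (Yk k)) : closed C -> closed (@ee k @` C).
Proof.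
move=> cC; apply: compact_closed; first exact: T_hausdorff.
apply: continuous_compact; first by apply: continuous_subspaceT; exact: ee_continuous.
apply: (subclosed_compact (B := setT)); [exact: cC|exact: Yk_compact|by []].
Qed.


Lemma valZ (z : T) : Z (val z).
Proof. exact/set_mem/(valP z). Qed.


Lemma ff_ex k (z : T) : exists q : Yk k, ee q = cc k z.
Proof.
have [[j Nj]|nN] := pselect (exists j, N j (val z)).
  rewrite (ccN k Nj); case: ifPn => kj.
    exists (\pi_(Yk k) (existT _ None (xs j) : adj_sum X' AA k)).
    by apply: val_inj; rewrite ee_pi.
  have jk : (j < k)%N by rewrite ltnNge.
  pose y : AA j := exist _ (val z) (mem_set (conj (valZ z) (N_A Nj))).
  exists (\pi_(Yk k) (existT _ (Some (Ordinal jk)) y : adj_sum X' AA k)).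
  by apply: val_inj; rewrite ee_pi.
have nN' : forall j, ~ N j (val z) by move=> j Nj; apply: nN; exists j.
have Xz : X (val z) by apply: contrapT => /notX_N [j Nj]; exact: nN' Nj.
rewrite ccnN //.
pose p : X' := exist _ (val z) (mem_set (conj (valZ z) Xz)).
exists (\pi_(Yk k) (existT _ None p : adj_sum X' AA k)).
by apply: val_inj; rewrite ee_pi.
Qed.

Definition ff k (z : T) : Yk k := projT1 (cid (ff_ex k z)).

Lemma ffE k z : ee (ff k z) = cc k z.
Proof. exact: (projT2 (cid (ff_ex k z))). Qed.

Lemma ff_continuous k : continuous (ff k).
Proof.
apply/continuous_closedP => D cD.
have -> : ff k @^-1` D = cc k @^-1` (@ee k @` D).
  apply/seteqP; split => z /=; first by move=> Dz; exists (ff k z); rewrite ?ffE.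
  by move=> [q Dq]; rewrite -ffE => /ee_inj <-.
apply: closed_comp => //; last exact: ee_closed.
by move=> ? _; exact: cc_continuous.
Qed.


Definition col k (z : T) : T := if `[< N k (val z) >] then xz k else z.

Lemma bool_match_ind (b : bool) (P : Type) (ft : b = true -> P)
  (fl : b = false -> P) (Q : P -> Prop) :
  (forall h, Q (ft h)) -> (forall h, Q (fl h)) ->
  Q ((match b as c return b = c -> P with true => ft | false => fl end) (erefl b)).
Proof. by move=> Ht Hf; case: b ft fl Ht Hf => ft fl Ht Hf /=; [exact: Ht|exact: Hf]. Qed.

Lemma ee_bond k (q : Yk k.+1) : ee (adj_bond q) = col k (ee q).
Proof.
rewrite /adj_bond /ee; move: (repr q) => s.
case: s => -[j|] y /=.
  apply: (bool_match_ind (Q := fun q => esum (repr q) = col k (esum (existT _ (Some j) y)))).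
    move=> h; rewrite -/(ee _) ee_pi; rewrite /col.
    case: asboolP => // Nk; exfalso.
    have /set_mem [_ Ay] := valP y.
    have jk := A_Ni Ay Nk.
    by move: h; rewrite jk ltnn.
  move=> h; rewrite -/(ee _) ee_pi; rewrite /col.
  have jk : nat_of_ord j = k.
    by apply/eqP; rewrite eqn_leq -ltnS ltn_ord leqNgt h.
  have /set_mem [_ Ay] := valP y.
  case: asboolP => Nk; first by apply: val_inj.
  apply: val_inj => /=.
  case: (A_N Ay) => [Nj|yx]; last by rewrite yx jk.
  by exfalso; apply: Nk; exact: (@eq_ind nat _ (fun i => N i (sval y)) Nj _ jk).
rewrite -/(ee _) ee_pi /col; case: asboolP => // Nk; exfalso.
have /set_mem [_ Xy] := valP y.
exact: NX Nk Xy.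
Qed.


Lemma col_X k z : ~ N k (val z) -> col k z = z.
Proof. by move=> nN; rewrite /col; case: asboolP. Qed.

Lemma cc_col k z : cc k z = col k (cc k.+1 z).
Proof.
have [[j Nj]|nN] := pselect (exists j, N j (val z)); last first.
  have nN' : forall j, ~ N j (val z) by move=> j Nj; apply: nN; exists j.
  by rewrite !ccnN // col_X.
rewrite !(ccN _ Nj).
case: (ltngtP k j) => kj.
- by rewrite col_X //= => /NX; apply; exact: xX.
- by rewrite col_X // => Nk; have jk := NN Nj Nk; rewrite jk ltnn in kj.
- by rewrite /col; case: asboolP; rewrite kj.
Qed.

Lemma ff_bond k z : adj_bond (ff k.+1 z) = ff k z.
Proof. by apply: ee_inj; rewrite ee_bond !ffE -cc_col. Qed.

Local Notation L := (@shrinking_adjunction X' AA xs as_).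

Definition FF (z : T) : L :=
  exist _ (fun k => ff k z) (@mem_set _ (@adj_limit_set X' AA xs as_) (fun k => ff k z) (fun k => ff_bond k z)).

Lemma FF_continuous : continuous FF.
Proof.
apply: continuous_comp_initial.
apply: prod_continuous => k; exact: ff_continuous.
Qed.


Lemma cc_big z : exists m, forall k, (m <= k)%N -> cc k z = z.
Proof.
have [[j Nj]|nN] := pselect (exists j, N j (val z)); last first.
  by exists 0%N => k _; apply: ccnN => j Nj; apply: nN; exists j.
exists j.+1 => k jk; rewrite (ccN k Nj).
by case: ifP => // kj; have := leq_trans jk kj; rewrite ltnn.
Qed.

Lemma FF_inj : injective FF.
Proof.
move=> z z' /(congr1 val) /= E.
have [m Hm] := cc_big z; have [m' Hm'] := cc_big z'.
have E' : ff (maxn m m') z = ff (maxn m m') z'.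
  by have := congr1 (fun f => f (maxn m m')) E.
have := congr1 (@ee _) E'; rewrite !ffE.
by rewrite Hm ?leq_maxl // Hm' ?leq_maxr.
Qed.

Lemma ee_range k (q : Yk k) :
  X (val (ee q)) \/ exists2 j, (j < k)%N & N j (val (ee q)).
Proof.
rewrite /ee; case: (repr q) => -[j|] y /=.
  have /set_mem [_ Ay] := valP y.
  case: (A_N Ay) => [Nj|->]; last by left; exact: xX.
  by right; exists (nat_of_ord j).
by left; have /set_mem [] := valP y.
Qed.

Lemma FF_surj (y : L) : exists z, FF z = y.
Proof.
pose yk := val y.
have hy : forall k, adj_bond (yk k.+1) = yk k by move=> k; have := set_mem (valP y); apply.
pose w k := ee (yk k).
have wrel k : w k = col k (w k.+1) by rewrite /w -ee_bond hy.
have down : forall z M, cc M z = w M -> forall n, (n <= M)%N -> cc n z = w n.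
  move=> z M HM n nM; move: (subnK nM); move: (M - n)%N => d.
  elim: d n {nM} => [|d IH] n; first by rewrite add0n => E; subst M.
  move=> nd; rewrite cc_col (IH n.+1); first by rewrite -wrel.
  by rewrite -addSnnS.
suff [z Hz] : exists z, forall n, exists2 M, (n <= M)%N & cc M z = w M.
  exists z; apply: val_inj => /=.
  apply: functional_extensionality_dep => k.
  apply: ee_inj; rewrite ffE.
  by have [M kM HM] := Hz k; exact: (down z M HM k kM).
have [[m [j Nj]]|nN] := pselect (exists m j, N j (val (w m))); last first.
  have nN' : forall m j, ~ N j (val (w m)) by move=> m j Nj; apply: nN; exists m, j.
  have wc : forall n, w n = w 0%N.
    elim=> // n IH; rewrite -IH (wrel n) col_X //; exact: nN'.
  exists (w 0%N) => n; exists n => //.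
  by rewrite ccnN ?wc //; exact: nN'.
have stable : forall d, w (m + d)%N = w m.
  elim=> [|d IH]; first by rewrite addn0.
  move: (wrel (m + d)%N); rewrite IH /col addnS.
  case: asboolP => [_ E|_ <- //].
  by exfalso; apply: (NX Nj); rewrite E; exact: xX.
have jm : (j < m)%N.
  case: (ee_range (yk m)) => [Xw|[j' j'm Nj']]; first by have := NX Nj Xw.
  by rewrite (NN Nj Nj').
exists (w m) => n; exists (maxn n m); first exact: leq_maxl.
rewrite (ccN _ Nj); case: ifP => [jn|_].
  by have := leq_trans (leq_trans jm (leq_maxr n m)) jn; rewrite ltnn.
by rewrite -(subnKC (leq_maxr n m)) stable.
Qed.

Lemma L_hausdorff : hausdorff_space L.
Proof.
apply: (@inj_hausdorff L (prod_topology (fun k => Yk k)) (fun y => val y)).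
- exact: initial_continuous.
- by move=> a b; exact: val_inj.
- apply: hausdorff_product => k; exact: Yk_hausdorff.
Qed.


Lemma homeo : homeomorphic T L.
Proof.
pose g y := projT1 (cid (FF_surj y)).
have gK : cancel g FF by move=> y; exact: projT2 (cid (FF_surj y)).
have Kg : cancel FF g by move=> z; apply: FF_inj; rewrite gK.
exists FF, g; split => //; first exact: FF_continuous.
apply/continuous_closedP => D cD.
have -> : g @^-1` D = FF @` D.
  apply/seteqP; split => y /=; first by move=> Dg; exists (g y); rewrite ?gK.
  by move=> [z Dz <-]; rewrite Kg.
apply: compact_closed; first exact: L_hausdorff.
apply: continuous_compact; first by apply: continuous_subspaceT; exact: FF_continuous.
apply: (subclosed_compact (B := setT)); [exact: cD|exact: T_compact|by []].
Qed.

End Main.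

Theorem proposition3p15 (R : realType) (Y : topologicalType) (X : set Y)
    (A : nat -> set Y) (x : nat -> Y) (Z : set Y) :
  hausdorff_space Y ->
  indeterminate_adjunction X A x ->
  peano_continuum R (set_type Z) ->
  Z `&` X !=set0 ->
  (forall j, Z `&` (A j `\ x j) !=set0) ->
  exists (hX : forall j, x j \in Z `&` X) (hA : forall j, x j \in Z `&` A j),
    homeomorphic (set_type Z)
      (@shrinking_adjunction (set_type (Z `&` X))
         (fun j => set_type (Z `&` A j))
         (fun j => exist _ (x j) (hX j))
         (fun j => exist _ (x j) (hA j))).
Proof.
move=> hY [cX [N [oN dN cXN AN AX]]] pZ ZX ZA.
have H := @homeo R Y X A x Z N hY cX oN dN cXN AN AX pZ ZX ZA.
by eexists; eexists; exact: H.
Qed.
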